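(* Let $G\subsetneq\mathbb{R}^n$ be a domain and let $p\ge 1$. Then for all points $z_1,z_2\in G$, \[ s_G(z_1,z_2)\le b_{G,p}(z_1,z_2)\le 2^{1-1/p}\,s_G(z_1,z_2). \]
   Context: For a domain $G\subsetneq\mathbb{R}^n$, $p\ge1$ and $z_1,z_2\in G$, the Barrlund metric is \[ b_{G,p}(z_1,z_2)=\sup_{z\in\partial G}\frac{|z_1-z_2|}{\sqrt[p]{|z_1-z|^p+|z-z_2|^p}}, \] and the triangular ratio metric is $s_G(z_1,z_2)=b_{G,1}(z_1,z_2)=\sup_{z\in\partial G}\frac{|z_1-z_2|}{|z_1-z|+|z-z_2|}$. *)

(* Defs.v *)
From HB Require Import structures.
From mathcomp Require Import all_boot all_order all_algebra.
From mathcomp Require Import all_classical all_reals all_analysis.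
Set Implicit Arguments. Unset Strict Implicit. Unset Printing Implicit Defensive.
Import Order.TTheory GRing.Theory Num.Theory.
Import numFieldNormedType.Exports.
Local Open Scope classical_set_scope.
Local Open Scope ring_scope.

(* The topology on 'rV[R]_n is the
   product topology, which coincides with the Euclidean one.  Distances are
   measured with the Euclidean norm (defined explicitly, since the library
   norm on matrices is the max norm). *)
Definition enorm (R : realType) (n : nat) (x : 'rV[R]_n) : R :=
  Num.sqrt (\sum_(i < n) (x ord0 i) ^+ 2).

Definition domain (R : realType) (n : nat) (G : set 'rV[R]_n) : Prop :=
  [/\ G !=set0, open G & connected G].

Definition boundary (R : realType) (n : nat) (G : set 'rV[R]_n) : set 'rV[R]_n :=
  closure G `\` interior G.

Definition barrlund (R : realType) (n : nat) (G : set 'rV[R]_n) (p : R)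
  (z1 z2 : 'rV[R]_n) : R :=
  sup [set enorm (z1 - z2) /
           powR (powR (enorm (z1 - z)) p + powR (enorm (z - z2)) p) p^-1
      | z in boundary G].

Definition triangular_ratio (R : realType) (n : nat) (G : set 'rV[R]_n)
  (z1 z2 : 'rV[R]_n) : R :=
  sup [set enorm (z1 - z2) / (enorm (z1 - z) + enorm (z - z2))
      | z in boundary G].

(* Main.v *)
Require Import Defs.
From HB Require Import structures.
From mathcomp Require Import all_boot all_order all_algebra.
From mathcomp Require Import all_classical all_reals all_analysis.
From mathcomp Require Import lra.
Import Order.TTheory GRing.Theory Num.Theory.
Import numFieldNormedType.Exports.
Local Open Scope classical_set_scope.
Local Open Scope ring_scope.

Section S.
Variable R : realType.
Implicit Types a b d p : R.

Lemma powR_le_sum a b p : 0 <= a -> 0 <= b -> 1 <= p ->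
  powR a p + powR b p <= powR (a + b) p.
Proof.
move=> a0 b0 p1.
have key x : 0 <= x -> x <= a + b -> powR x p <= x * powR (a + b) (p - 1).
  move=> x0 xs.
  have -> : powR x p = x * powR x (p - 1).
    rewrite -{2}(powRr1 x0) -powRD; first by rewrite subrKC.
    by apply/implyP; rewrite subrKC => /eqP p0; move: p1; rewrite p0 ler10.
  rewrite ler_wpM2l // ge0_ler_powR // ?subr_ge0 // nnegrE //; lra.
apply: (le_trans (lerD (key a a0 _) (key b b0 _))); [lra|lra|].
rewrite -mulrDl -{1}(powRr1 (addr_ge0 a0 b0)) -powRD; first by rewrite subrKC.
by apply/implyP; rewrite subrKC => /eqP p0; move: p1; rewrite p0 ler10.
Qed.

Lemma M_le a b p : 0 <= a -> 0 <= b -> 1 <= p ->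
  powR (powR a p + powR b p) p^-1 <= a + b.
Proof.
move=> a0 b0 p1.
have p0 : p != 0 by apply/eqP => p0; move: p1; rewrite p0 ler10.
rewrite -[leRHS](powRr1 (addr_ge0 a0 b0)) -(mulfV p0) powRrM.
rewrite ge0_ler_powR ?invr_ge0 ?nnegrE ?addr_ge0 ?powR_ge0 //; first lra.
exact: powR_le_sum.
Qed.

Lemma M_ge a b p : 0 <= a -> 0 <= b -> 1 <= p ->
  a + b <= powR 2 (1 - p^-1) * powR (powR a p + powR b p) p^-1.
Proof.
move=> a0 b0 p1.
have [->|pn1] := eqVneq p 1.
  by rewrite invr1 subrr powRr0 mul1r !powRr1 ?addr_ge0.
have p1' : 1 < p by rewrite lt_neqAle eq_sym pn1.
have pp : 0 < p by lra.
have hq : 0 < 1 - p^-1 by rewrite subr_gt0 invf_lt1.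
have := @hoelder2 R a b 1 1 p (1 - p^-1)^-1 a0 b0 ler01 ler01 pp.
rewrite invr_gt0 hq invrK => /(_ isT).
rewrite subrKC => /(_ erefl).
by rewrite !powR1 !mulr1 mulrC.
Qed.
Lemma L1 a b d p : 0 <= a -> 0 <= b -> 0 <= d -> 1 <= p ->
  d / (a + b) <= d / powR (powR a p + powR b p) p^-1.
Proof.
move=> a0 b0 d0 p1; set M := powR _ p^-1.
have hM : M <= a + b := M_le a b p a0 b0 p1; have M0 : 0 <= M by exact: powR_ge0.
have [Mz|Mp] := eqVneq M 0.
  have /powR_eq0_eq0 h := Mz.
  have ha : powR a p = 0 by apply/eqP; rewrite eq_le powR_ge0 andbT -h lerDl powR_ge0.
  have hb : powR b p = 0 by apply/eqP; rewrite eq_le powR_ge0 andbT -h lerDr powR_ge0.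
  by rewrite (powR_eq0_eq0 ha) (powR_eq0_eq0 hb) addr0 Mz.
have Mp' : 0 < M by rewrite lt_neqAle eq_sym Mp.
have abp : 0 < a + b by lra.
by rewrite ler_wpM2l // lef_pV2 ?posrE.
Qed.

Lemma L2 a b d p : 0 <= a -> 0 <= b -> 0 <= d -> 1 <= p ->
  d / powR (powR a p + powR b p) p^-1 <= powR 2 (1 - p^-1) * (d / (a + b)).
Proof.
move=> a0 b0 d0 p1; set M := powR _ p^-1; set c := powR 2 _.
have hM : a + b <= c * M := M_ge a b p a0 b0 p1; have M0 : 0 <= M by exact: powR_ge0.
have c0 : 0 < c by rewrite powR_gt0.
have [abz|abp] := eqVneq (a + b) 0.
  have az : a = 0 by lra.
  have bz : b = 0 by lra.
  by rewrite /M az bz powR0 ?addr0 ?powR0 ?invr0 ?mulr0 // ?invr_neq0 //;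
    apply/eqP => p0; move: p1; rewrite p0 ler10.
have abp' : 0 < a + b by lra.
have Mp : 0 < M by rewrite -(pmulr_rgt0 _ c0); lra.
rewrite mulrCA ler_wpM2l // -[c](invrK) -invfM lef_pV2 ?posrE ?mulr_gt0 ?invr_gt0 //.
by rewrite ler_pdivrMl.
Qed.

Lemma L3 a b d : 0 <= a -> 0 <= b -> 0 <= d -> d <= 2 * (a + b) ->
  0 <= d / (a + b) <= 2.
Proof.
move=> a0 b0 d0 h; rewrite divr_ge0 ?addr_ge0 //=.
have [abz|abp] := eqVneq (a + b) 0; first by rewrite abz invr0 mulr0.
by rewrite ler_pdivrMr; lra.
Qed.
End S.

Lemma enorm_ge0 (R : realType) n (x : 'rV[R]_n) : 0 <= enorm x.
Proof. exact: sqrtr_ge0. Qed.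

Lemma enorm_tri2 (R : realType) n (x y : 'rV[R]_n) :
  enorm (x + y) <= 2 * (enorm x + enorm y).
Proof.
rewrite /enorm.
set X := \sum_(i < n) (x ord0 i) ^+ 2; set Y := \sum_(i < n) (y ord0 i) ^+ 2.
have X0 : 0 <= X by apply: sumr_ge0 => i _; exact: sqr_ge0.
have Y0 : 0 <= Y by apply: sumr_ge0 => i _; exact: sqr_ge0.
have hs : \sum_(i < n) ((x + y) ord0 i) ^+ 2 <= 2 * X + 2 * Y.
  rewrite /X /Y !mulr_sumr -big_split /=; apply: ler_sum => i _.
  rewrite mxE; set u := x ord0 i; set v := y ord0 i; have := sqr_ge0 (u - v); nra.
have sx := sqr_sqrtr X0; have sy := sqr_sqrtr Y0.
have hx := sqrtr_ge0 X; have hy := sqrtr_ge0 Y.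
rewrite -[leRHS]ger0_norm ?mulr_ge0 ?addr_ge0 // -sqrtr_sqr ler_wsqrtr //.
apply: (le_trans hs). nra.
Qed.

Theorem theorem1p1 (R : realType) (n : nat) (G : set 'rV[R]_n) (p : R)
  (hG : domain G) (hGT : G != setT) (hp : 1 <= p)
  (z1 z2 : 'rV[R]_n) (hz1 : G z1) (hz2 : G z2) :
  triangular_ratio G z1 z2 <= barrlund G p z1 z2 /\
  barrlund G p z1 z2 <= powR 2 (1 - p^-1) * triangular_ratio G z1 z2.
Proof.
rewrite /triangular_ratio /barrlund.
set c := powR 2 (1 - p^-1).
have c0 : 0 <= c by exact: powR_ge0.
set fs := fun z => enorm (z1 - z2) / (enorm (z1 - z) + enorm (z - z2)).
set fb := fun z => enorm (z1 - z2) /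
  powR (powR (enorm (z1 - z)) p + powR (enorm (z - z2)) p) p^-1.
change (sup (fs @` boundary G) <= sup (fb @` boundary G) /\ sup (fb @` boundary G) <= c * sup (fs @` boundary G)).
have hs z : 0 <= fs z <= 2.
  apply: L3; rewrite ?enorm_ge0 //.
  have -> : z1 - z2 = (z1 - z) + (z - z2) by rewrite addrA subrK.
  exact: enorm_tri2.
have h1 z : fs z <= fb z by apply: L1; rewrite ?enorm_ge0.
have h2 z : fb z <= c * fs z by apply: L2; rewrite ?enorm_ge0.
have ubS : has_ubound (fs @` boundary G).
  by exists 2 => _ [z _ <-]; case/andP: (hs z).
have ubB : has_ubound (fb @` boundary G).
  exists (c * 2) => _ [z _ <-]; apply: (le_trans (h2 z)).
  by rewrite ler_wpM2l //; case/andP: (hs z).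
have [[w bw]|bd0] := pselect (boundary G !=set0); last first.
  have E : boundary G = set0 by apply/seteqP; split => // x bx; apply: bd0; exists x.
  by rewrite E !image_set0 sup0 mulr0 lexx.
split.
  apply: ge_sup; first by exists (fs w), w.
  move=> _ [z bz <-]; apply: (le_trans (h1 z)); apply: ub_le_sup => //.
apply: ge_sup; first by exists (fb w), w.
move=> _ [z bz <-]; apply: (le_trans (h2 z)); rewrite ler_wpM2l //.
by apply: ub_le_sup => //; exists z.
Qed.
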